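(* Let $m\in\mathbb{N}$ and let $A,B$ be finite (nonempty) sequences of positive integers. If $A$ and $B$ are $m$-palindromes, then the concatenation $ABA$ is an $m$-palindrome.
   Context: For a finite sequence $(c_0,\dots,c_k)$ of positive integers, $[c_0,\dots,c_k]$ denotes the value of the finite continued fraction $c_0+\cfrac{1}{c_1+\cfrac{1}{\ddots+\cfrac{1}{c_k}}}$. A finite sequence $(c_0,\dots,c_k)$ of positive integers is an $m$-palindrome ($m\in\mathbb{N}$) if $[c_0,\dots,c_k]=m\,[c_k,\dots,c_0]$. *)

(* Defs.v *)
From mathcomp Require Import all_boot all_order all_algebra.
Set Implicit Arguments. Unset Strict Implicit. Unset Printing Implicit Defensive.
Import Order.TTheory GRing.Theory Num.Theory.
Local Open Scope ring_scope.

(* [c_0, ..., c_k] = c_0 + 1/(c_1 + 1/(... + 1/c_k)).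
   Value on the empty sequence is irrelevant (set to 0); sequences used
   are nonempty. *)
Fixpoint cf (s : seq nat) : rat :=
  match s with
  | [::] => 0
  | [:: c] => c%:R
  | c :: t => c%:R + (cf t)^-1
  end.

Definition pos_seq (s : seq nat) : bool := (s != [::]) && all (fun c => 0 < c)%N s.

Definition m_palindrome (m : nat) (s : seq nat) : Prop :=
  cf s = m%:R * cf (rev s).

(* Main.v *)
Require Import Defs.
From mathcomp Require Import all_boot all_order all_algebra.
From mathcomp Require Import ring lra.
Set Implicit Arguments. Unset Strict Implicit. Unset Printing Implicit Defensive.
Import Order.TTheory GRing.Theory Num.Theory.

Local Open Scope ring_scope.

Definition q4 := (rat * rat * rat * rat)%type.
Definition mul4 (x y : q4) : q4 :=
  let: (a, b, c, d) := x in let: (e, f, g, h) := y in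
  (a*e + b*g, a*f + b*h, c*e + d*g, c*f + d*h).
Definition tr4 (x : q4) : q4 := let: (a, b, c, d) := x in (a, c, b, d).
Definition id4 : q4 := (1, 0, 0, 1).
Definition cm (c : nat) : q4 := (c%:R, 1, 1, 0).

Fixpoint mat (s : seq nat) : q4 :=
  match s with [::] => id4 | c :: t => mul4 (cm c) (mat t) end.

Lemma mul4A x y z : mul4 x (mul4 y z) = mul4 (mul4 x y) z.
Proof.
case: x => [[[a b] c] d]; case: y => [[[e f] g] h]; case: z => [[[i j] k] l].
by rewrite /mul4; congr (_,_,_,_); ring.
Qed.

Lemma mul4_id x : mul4 id4 x = x.
Proof. case: x => [[[a b] c] d]; rewrite /mul4 /id4; congr (_,_,_,_); ring. Qed.
Lemma mul4_idr x : mul4 x id4 = x.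
Proof. case: x => [[[a b] c] d]; rewrite /mul4 /id4; congr (_,_,_,_); ring. Qed.

Lemma mat_cat s t : mat (s ++ t) = mul4 (mat s) (mat t).
Proof.
elim: s => [|c s IH]; first exact: (esym (mul4_id _)).
by rewrite [LHS]/= IH -mul4A.
Qed.

Lemma tr4_mul x y : tr4 (mul4 x y) = mul4 (tr4 y) (tr4 x).
Proof.
case: x => [[[a b] c] d]; case: y => [[[e f] g] h].
by rewrite /mul4 /tr4; congr (_,_,_,_); ring.
Qed.

Lemma mat_rev s : mat (rev s) = tr4 (mat s).
Proof.
elim: s => [|c s IH] //.
rewrite rev_cons -cats1 mat_cat IH.
change (mat [:: c]) with (mul4 (cm c) id4).
change (mat (c :: s)) with (mul4 (cm c) (mat s)).
by rewrite mul4_idr tr4_mul.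
Qed.

Lemma mat_pos s : pos_seq s ->
  let: (p, p', q, q') := mat s in 0 < p /\ 0 < q /\ cf s = p / q.
Proof.
rewrite /pos_seq; elim: s => [|c t IH] // /andP [_] /= /andP [hc ht].
case: t IH ht => [|c' t'] IH ht.
  rewrite /= /id4 /cm /mul4 !mulr1 !mulr0 ?addr0 ?add0r.
  by split => //; rewrite ltr0n.
have := IH ht; rewrite /= in ht.
rewrite -/(mat (c' :: t')) -/(cf (c' :: t')).
case: (mat (c' :: t')) => [[[P P'] Q] Q'] [hP [hQ hcf]].
rewrite /cm /mul4 !mul1r !mul0r !addr0.
have hc0 : (0 : rat) <= c%:R by rewrite ler0n.
split; first by apply: ltr_wpDl => //; apply: mulr_ge0 => //; apply: ltW.
split=> //.
rewrite hcf invf_div; field.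
by rewrite gt_eqF.
Qed.

Lemma pos_rev s : pos_seq s -> pos_seq (rev s).
Proof.
rewrite /pos_seq => /andP [h1 h2]; apply/andP; split.
  by rewrite -size_eq0 size_rev size_eq0.
by rewrite all_rev.
Qed.

Lemma pos_cat s t : pos_seq s -> pos_seq t -> pos_seq (s ++ t).
Proof.
rewrite /pos_seq => /andP [h1 h2] /andP [h3 h4]; apply/andP; split.
  by rewrite -size_eq0 size_cat addn_eq0 size_eq0 negb_and h1.
by rewrite all_cat h2 h4.
Qed.

Lemma pal_form m s : pos_seq s -> m_palindrome m s ->
  let: (p, p', q, q') := mat s in p' = m%:R * q /\ m%:R != 0 :> rat.
Proof.
move=> hs; rewrite /m_palindrome.
have := mat_pos hs; have := mat_pos (pos_rev hs); rewrite mat_rev.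
case: (mat s) => [[[p p'] q] q'] /= [hp [hp' ->]] [_ [hq ->]] h.
have hm : m%:R != 0 :> rat.
  apply/eqP => hm; move: h; rewrite hm mul0r => /eqP.
  by rewrite mulf_eq0 invr_eq0 (gt_eqF hp) (gt_eqF hq).
split=> //.
have hp0 := lt0r_neq0 hp; have hq0 := lt0r_neq0 hq; have hp'0 := lt0r_neq0 hp'.
have e : p' = p' * (p / q) * q / p by field; rewrite ?hp0 ?hq0.
by rewrite e h; field; rewrite ?hp0 ?hp'0.
Qed.

Theorem lemma3p9 (m : nat) (A B : seq nat) :
  pos_seq A -> pos_seq B ->
  m_palindrome m A -> m_palindrome m B ->
  m_palindrome m (A ++ B ++ A).
Proof.
move=> hA hB pA pB.
have hABA : pos_seq (A ++ B ++ A) by do 2 apply: pos_cat => //.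
have := mat_pos hABA; have := mat_pos (pos_rev hABA).
have := pal_form hA pA; have := pal_form hB pB.
rewrite /m_palindrome mat_rev !mat_cat.
case: (mat A) => [[[a a'] b] b']; case: (mat B) => [[[e e'] f] f'].
rewrite /mul4 /tr4.
move=> [-> _] [-> hm] [_ [_ ->]] [_ [hq ->]].
set D := (b * _ + _) in hq *.
rewrite (_ : a * (e * (m%:R * b) + m%:R * f * b') +
    m%:R * b * (f * (m%:R * b) + f' * b') = m%:R * D); last by rewrite /D; ring.
by field; rewrite hm (lt0r_neq0 hq).
Qed.
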